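(* Let $\mathcal{T}$ be a fully sparse tournament with ordering $\sigma$ and backward arcs $e_1,\dots,e_b$. Let $G'$ be the digraph with vertex set $\{e_1,\dots,e_b\}$ having an arc $e_ie_j$ ($i\ne j$) whenever $(h(e_i),h(e_j),t(e_i))$ or $(h(e_i),t(e_j),t(e_i))$ is a triangle of $\mathcal{T}$ (equivalently, whenever $h(e_j)$ or $t(e_j)$ lies strictly between $h(e_i)$ and $t(e_i)$ in $\sigma$). Then the maximum number of pairwise arc-disjoint triangles of $\mathcal{T}$ equals the maximum size of an arc set $X\subseteq A(G')$ such that every vertex of $G'$ has out-degree at most $1$ in $X$ and $X$ contains no digon (no pair of arcs $xy,yx$). Moreover, for such a set $X$, the triangles $\Pi(e_ie_j)$, $e_ie_j\in X$, are pairwise arc-disjoint, where $\Pi(e_ie_j)$ is the triangle formed by $e_i$ and the endpoint of $e_j$ lying strictly between $h(e_i)$ and $t(e_i)$; and $X$ is optimal if and only if $\{\Pi(x):x\in X\}$ is a maximum triangle packing of $\mathcal{T}$.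
   Context: A tournament is an orientation of a complete graph; a triangle is a directed cycle of length 3. For an arc $a=uv$, $h(a)=v$ is its head and $t(a)=u$ its tail. Given a linear ordering $\sigma$ of the vertices, an arc $uv$ is backward if $v$ comes before $u$ in $\sigma$. $\mathcal{T}$ is fully sparse (with respect to $\sigma$) if the backward arcs form a matching, no backward arc joins two consecutive vertices of $\sigma$, and every vertex is the head or the tail of some backward arc. *)

(* Defs.v *)
From mathcomp Require Import all_boot.
Set Implicit Arguments. Unset Strict Implicit. Unset Printing Implicit Defensive.

Section Defs.
Variables (T : finType) (arc : rel T) (sigma : T -> nat).

Definition tournament : Prop :=
  (forall u, ~~ arc u u) /\
  (forall u v, u != v -> (arc u v || arc v u) && ~~ (arc u v && arc v u)).

(* sigma is a linear ordering of the vertices, given by injective ranks *)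
Definition between (a x b : T) : bool := (sigma a < sigma x) && (sigma x < sigma b).

Definition tl (e : T * T) : T := e.1.
Definition hd (e : T * T) : T := e.2.

Definition backward (e : T * T) : bool := arc e.1 e.2 && (sigma e.2 < sigma e.1).

Definition consecutive (u v : T) : bool :=
  (u != v) && [forall w, ~~ (between u w v || between v w u)].

Definition fully_sparse : Prop :=
  (forall e f, backward e -> backward f -> e != f ->
     [&& tl e != tl f, tl e != hd f, hd e != tl f & hd e != hd f]) /\
  (forall e, backward e -> ~~ consecutive (tl e) (hd e)) /\
  (forall v, exists e, backward e /\ (v = tl e \/ v = hd e)).

Definition triple_triangle (a b c : T) : bool := [&& arc a b, arc b c & arc c a].

Definition is_triangle (A : {set T * T}) : bool :=
  [exists a, exists b, exists c,
     triple_triangle a b c && (A == [set (a, b); (b, c); (c, a)])].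

Definition packing (P : {set {set T * T}}) : bool :=
  [forall A in P, is_triangle A] &&
  [forall A in P, forall B in P, (A != B) ==> [disjoint A & B]].

Definition packing_number : nat :=
  \max_(P : {set {set T * T}} | packing P) #|P|.

Definition max_packing (P : {set {set T * T}}) : bool :=
  packing P && (#|P| == packing_number).

Definition Garc (ei ej : T * T) : bool :=
  [&& backward ei, backward ej, ei != ej &
      triple_triangle (hd ei) (hd ej) (tl ei) || triple_triangle (hd ei) (tl ej) (tl ei)].

Definition goodX (X : {set (T * T) * (T * T)}) : bool :=
  [&& [forall x in X, Garc x.1 x.2],
      [forall e : T * T, #|[set f | (e, f) \in X]| <= 1] &
      [forall x in X, (x.2, x.1) \notin X]].

Definition maxX : nat := \max_(X : {set (T * T) * (T * T)} | goodX X) #|X|.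

Definition is_Pi (x : (T * T) * (T * T)) (A : {set T * T}) : Prop :=
  exists y, (y = tl x.2 \/ y = hd x.2) /\ between (hd x.1) y (tl x.1) /\
    A = [set (hd x.1, y); (y, tl x.1); (tl x.1, hd x.1)].

End Defs.

(* Main.v *)
Require Import Defs.
From mathcomp Require Import all_boot.
From mathcomp Require Import zify.
Set Implicit Arguments. Unset Strict Implicit. Unset Printing Implicit Defensive.

Section Proof.
Variables (T : finType) (arc : rel T) (sigma : T -> nat).
Hypotheses (Htour : tournament arc) (Hinj : injective sigma)
  (Hfs : fully_sparse arc sigma).

Lemma disjP (A B : {set T * T}) :
  (forall z, z \in A -> z \in B -> False) -> [disjoint A & B].
Proof.
move=> H; rewrite -setI_eq0; apply/eqP/setP => z; rewrite !inE.
by apply/negbTE/negP => /andP[/H h /h].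
Qed.

Lemma disjE (A B : {set T * T}) z :
  [disjoint A & B] -> z \in A -> z \in B -> False.
Proof. by move=> /disjointFr H /H ->. Qed.

Lemma arc_irr u : ~~ arc u u.
Proof. by case: Htour. Qed.

Lemma sig_neq u v : u != v -> sigma u != sigma v.
Proof. by apply: contra => /eqP/Hinj ->. Qed.

Lemma back_uniq e f : backward arc sigma e -> backward arc sigma f ->
  (tl e = tl f \/ tl e = hd f \/ hd e = tl f \/ hd e = hd f) -> e = f.
Proof.
move=> be bf H; case: (eqVneq e f) => // nef.
case: Hfs => Hm _; move: (Hm e f be bf nef).
by case: H => [->|[->|[->|->]]]; rewrite eqxx //= ?andbF.
Qed.

Lemma back_lt e : backward arc sigma e -> sigma (hd e) < sigma (tl e).
Proof. by case/andP. Qed.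

Definition tri (e : T * T) (y : T) : {set T * T} :=
  [set (hd e, y); (y, tl e); (tl e, hd e)].

Lemma tri_between e y : backward arc sigma e ->
  triple_triangle arc (hd e) y (tl e) -> between sigma (hd e) y (tl e).
Proof.
move=> be /and3P[a1 a2 a3]; have lt := back_lt be.
have n1 : hd e != y by apply: contraTneq a1 => ->; apply: arc_irr.
have n2 : y != tl e by apply: contraTneq a2 => ->; apply: arc_irr.
move: (sig_neq n1) (sig_neq n2) => s1 s2.
apply/andP; split.
  case: (ltnP (sigma (hd e)) (sigma y)) => // h.
  have bf : backward arc sigma (hd e, y) by rewrite /backward /= a1 /=; lia.
  have E := back_uniq be bf (or_intror (or_intror (or_introl erefl))).
  have E2 : tl e = hd e by rewrite {1}E.
  by move: lt; rewrite E2 ltnn.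
case: (ltnP (sigma y) (sigma (tl e))) => // h.
have bf : backward arc sigma (y, tl e) by rewrite /backward /= a2 /=; lia.
have E := back_uniq be bf (or_intror (or_introl erefl)).
have E2 : hd e = tl e by rewrite {1}E.
by move: lt; rewrite E2 ltnn.
Qed.

Lemma between_tri e y : backward arc sigma e ->
  between sigma (hd e) y (tl e) -> triple_triangle arc (hd e) y (tl e).
Proof.
move=> be /andP[b1 b2]; have a3 : arc (tl e) (hd e) by case/andP: be.
have n1 : hd e != y by apply: contraTneq b1 => ->; rewrite ltnn.
have n2 : y != tl e by apply: contraTneq b2 => ->; rewrite ltnn.
apply/and3P; split => //.
  have := Htour.2 _ _ n1; case/andP => /orP[//|a] _.
  have bf : backward arc sigma (y, hd e) by rewrite /backward /= a.
  have E := back_uniq be bf (or_intror (or_intror (or_intror erefl))).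
  have E2 : tl e = y by rewrite {1}E.
  by move: b2; rewrite E2 ltnn.
have := Htour.2 _ _ n2; case/andP => /orP[//|a] _.
have bf : backward arc sigma (tl e, y) by rewrite /backward /= a.
have E := back_uniq be bf (or_introl erefl).
have E2 : hd e = y by rewrite {1}E.
by move: b1; rewrite E2 ltnn.
Qed.

Lemma tri_is e y : backward arc sigma e -> between sigma (hd e) y (tl e) ->
  is_triangle arc (tri e y).
Proof.
move=> be bt; apply/existsP; exists (hd e); apply/existsP; exists y.
apply/existsP; exists (tl e); apply/andP; split; [exact: between_tri | by []].
Qed.

Lemma tri_base a b c : arc a b -> arc b c -> arc c a ->
  sigma a < sigma b -> sigma a < sigma c ->
  exists e y, [/\ backward arc sigma e, between sigma (hd e) y (tl e) &
    [set (a, b); (b, c); (c, a)] = tri e y].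
Proof.
move=> ab bc ca lb lc; case: (ltnP (sigma b) (sigma c)) => h.
  exists (c, a), b; split => //; first by rewrite /backward /= ca.
  by rewrite /between /= lb h.
have nbc : b != c by apply: contraTneq bc => ->; apply: arc_irr.
have h2 : sigma c < sigma b by move: (sig_neq nbc); lia.
have f1 : backward arc sigma (b, c) by rewrite /backward /= bc.
have f2 : backward arc sigma (c, a) by rewrite /backward /= ca.
have := back_uniq f1 f2 (or_intror (or_intror (or_introl erefl))).
by case=> E1 _; move: h2; rewrite E1 ltnn.
Qed.

Lemma tri_decomp A : is_triangle arc A ->
  exists e y, [/\ backward arc sigma e, between sigma (hd e) y (tl e) & A = tri e y].
Proof.
case/existsP=> a /existsP[b /existsP[c /andP[/and3P[ab bc ca] /eqP ->]]].
have nab : a != b by apply: contraTneq ab => ->; apply: arc_irr.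
have nbc : b != c by apply: contraTneq bc => ->; apply: arc_irr.
have nca : c != a by apply: contraTneq ca => ->; apply: arc_irr.
move: (sig_neq nab) (sig_neq nbc) (sig_neq nca) => s1 s2 s3.
case: (ltnP (sigma a) (sigma b)) => h1; case: (ltnP (sigma a) (sigma c)) => h2.
- exact: tri_base.
- have E : [set (a, b); (b, c); (c, a)] = [set (c, a); (a, b); (b, c)].
    by apply/setP => z; rewrite !inE; do 3 case: (z == _).
  rewrite E; apply: tri_base => //; lia.
- case: (ltnP (sigma b) (sigma c)) => h3.
  + have E : [set (a, b); (b, c); (c, a)] = [set (b, c); (c, a); (a, b)].
      by apply/setP => z; rewrite !inE; do 3 case: (z == _).
    rewrite E; apply: tri_base => //; lia.
  + have E : [set (a, b); (b, c); (c, a)] = [set (c, a); (a, b); (b, c)].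
      by apply/setP => z; rewrite !inE; do 3 case: (z == _).
    rewrite E; apply: tri_base => //; lia.
- case: (ltnP (sigma b) (sigma c)) => h3.
  + have E : [set (a, b); (b, c); (c, a)] = [set (b, c); (c, a); (a, b)].
      by apply/setP => z; rewrite !inE; do 3 case: (z == _).
    rewrite E; apply: tri_base => //; lia.
  + have E : [set (a, b); (b, c); (c, a)] = [set (c, a); (a, b); (b, c)].
      by apply/setP => z; rewrite !inE; do 3 case: (z == _).
    rewrite E; apply: tri_base => //; lia.
Qed.

Lemma in3 (z a b c : T * T) : z \in [set a; b; c] -> z = a \/ z = b \/ z = c.
Proof. by rewrite !inE => /orP[/orP[]|] /eqP; tauto. Qed.

Lemma tri_share e e' b b' z : backward arc sigma e -> backward arc sigma e' ->
  e != e' -> z \in tri e b -> z \in tri e' b' ->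
  (hd e = b' /\ b = tl e') \/ (b = hd e' /\ tl e = b').
Proof.
move=> be be' ne /in3 [->|[->|->]] /in3 [[E1 E2]|[[E1 E2]|[E1 E2]]];
  first [by left; split | by right; split |
         exfalso; move/eqP: ne; apply; apply: back_uniq => //; tauto].
Qed.

Lemma goodX_out X x y : goodX arc sigma X -> x \in X -> y \in X -> x.1 = y.1 -> x = y.
Proof.
case/and3P=> _ /forallP /(_ x.1) /card_le1P H _ xX yX E.
have h1 : x.2 \in [set f | (x.1, f) \in X] by rewrite inE -surjective_pairing.
have h2 : y.2 \in [set f | (x.1, f) \in X] by rewrite inE E -surjective_pairing.
have := H _ h1 y.2; rewrite h2 => /esym/eqP E2.
by rewrite [x]surjective_pairing [y]surjective_pairing E E2.
Qed.

Lemma Pi_tri X x A : goodX arc sigma X -> x \in X -> is_Pi sigma x A ->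
  exists y, [/\ backward arc sigma x.1, backward arc sigma x.2,
    between sigma (hd x.1) y (tl x.1), (y = tl x.2 \/ y = hd x.2) & A = tri x.1 y].
Proof.
case/and3P=> /forallP /(_ x) H _ _ xX [y [h1 [h2 h3]]].
move: H; rewrite xX => /and4P[b1 b2 _ _]; by exists y; split.
Qed.

Lemma endpt_uniq f g y : backward arc sigma f -> backward arc sigma g ->
  (y = tl f \/ y = hd f) -> (y = tl g \/ y = hd g) -> f = g.
Proof.
move=> bf bg h1 h2; apply: back_uniq => //.
by case: h1 => <-; case: h2 => <-; tauto.
Qed.

Lemma Pi_disj X (Pi : (T * T) * (T * T) -> {set T * T}) x y :
  goodX arc sigma X -> (forall x, x \in X -> is_Pi sigma x (Pi x)) ->
  x \in X -> y \in X -> x != y -> [disjoint Pi x & Pi y].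
Proof.
move=> gX HPi xX yX nxy.
have [b [bx1 bx2 btx ex ->]] := Pi_tri gX xX (HPi _ xX).
have [b' [by1 by2 bty ey ->]] := Pi_tri gX yX (HPi _ yX).
have ne : x.1 != y.1 by apply: contra nxy => /eqP/(goodX_out gX xX yX) ->.
apply: disjP => z H1 H2.
have [E1 E2] : x.2 = y.1 /\ y.2 = x.1.
  case: (tri_share bx1 by1 ne H1 H2) => [[h1 h2]|[h1 h2]]; split.
  - by apply: (endpt_uniq bx2 by1 ex); left.
  - by apply: (endpt_uniq by2 bx1 ey); right.
  - by apply: (endpt_uniq bx2 by1 ex); right.
  - by apply: (endpt_uniq by2 bx1 ey); left.
case/and3P: gX => _ _ /forallP /(_ x); rewrite xX /= => /negP; apply.
by rewrite E1 -E2 -surjective_pairing.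
Qed.

Lemma pack_tri P A : packing arc P -> A \in P -> is_triangle arc A.
Proof. by case/andP=> /forallP H _ AP; move: (H A); rewrite AP. Qed.

Lemma pack_disj P A B : packing arc P -> A \in P -> B \in P -> A != B ->
  [disjoint A & B].
Proof.
case/andP=> _ /forallP H AP BP nAB; move: (H A); rewrite AP => /forallP /(_ B).
by rewrite BP nAB.
Qed.

Lemma tri_in e y : (tl e, hd e) \in tri e y.
Proof. by rewrite !inE eqxx !orbT. Qed.

Lemma image_props X (Pi : (T * T) * (T * T) -> {set T * T}) :
  goodX arc sigma X -> (forall x, x \in X -> is_Pi sigma x (Pi x)) ->
  packing arc [set Pi x | x in X] /\ #|[set Pi x | x in X]| = #|X|.
Proof.
move=> gX HPi.
have inj : {in X &, injective Pi}.
  move=> x y xX yX E; apply/eqP; apply/negP => /negP nxy.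
  have D := Pi_disj gX HPi xX yX nxy.
  have [b [bx1 _ _ _ Ex]] := Pi_tri gX xX (HPi _ xX).
  have hx : (tl x.1, hd x.1) \in Pi x by rewrite Ex tri_in.
  by apply: (disjE D hx); rewrite -E.
split; last exact: card_in_imset.
apply/andP; split.
  apply/forallP => A; apply/implyP => /imsetP[x xX ->].
  have [b [bx1 _ bt _ ->]] := Pi_tri gX xX (HPi _ xX); exact: tri_is.
apply/forallP => A; apply/implyP => /imsetP[x xX ->].
apply/forallP => B; apply/implyP => /imsetP[y yX ->].
apply/implyP => ne; apply: (Pi_disj gX HPi xX yX).
by apply: contra ne => /eqP ->.
Qed.

Definition Pi0 (x : (T * T) * (T * T)) : {set T * T} :=
  if [pick y | ((y == tl x.2) || (y == hd x.2)) && between sigma (hd x.1) y (tl x.1)]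
  is Some y then tri x.1 y else set0.

Lemma Pi0_ok X : goodX arc sigma X -> forall x, x \in X -> is_Pi sigma x (Pi0 x).
Proof.
case/and3P=> /forallP H _ _ x xX; move: (H x); rewrite xX => /and4P[b1 b2 _ tt].
rewrite /Pi0; case: pickP => [y /andP[h1 h2]|N].
  by exists y; split => //; case/orP: h1 => /eqP ->; tauto.
exfalso; case/orP: tt => /(tri_between b1) bt.
  by move: (N (hd x.2)); rewrite bt eqxx orbT.
by move: (N (tl x.2)); rewrite bt eqxx.
Qed.

Lemma maxX_le : maxX arc sigma <= packing_number arc.
Proof.
apply/bigmax_leqP => X gX.
have [pk <-] := image_props gX (Pi0_ok gX).
exact: leq_bigmax_cond.
Qed.

Definition X_of (P : {set {set T * T}}) : {set (T * T) * (T * T)} :=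
  [set x | Garc arc sigma x.1 x.2 && [exists y, [&& (y == tl x.2) || (y == hd x.2),
      between sigma (hd x.1) y (tl x.1) & tri x.1 y \in P]]].

Lemma X_ofP P x : x \in X_of P -> exists y, backward arc sigma x.1 /\
   backward arc sigma x.2 /\ x.1 != x.2 /\ (y = tl x.2 \/ y = hd x.2) /\
   between sigma (hd x.1) y (tl x.1) /\ tri x.1 y \in P.
Proof.
rewrite inE => /andP[/and4P[b1 b2 ne _] /existsP[y /and3P[h1 h2 h3]]].
by exists y; do !split => //; case/orP: h1 => /eqP ->; tauto.
Qed.

Lemma X_of_good P : packing arc P -> goodX arc sigma (X_of P).
Proof.
move=> pk; apply/and3P; split.
- by apply/forallP => x; apply/implyP; rewrite inE => /andP[].
- set X := X_of P.
  apply/forallP => e; apply/card_le1P => f Hf g; rewrite inE in Hf *.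
  apply/idP/eqP => [Hg|->]; last by rewrite inE.
  rewrite inE in Hg.
  have [y [b1 [b2 [_ [ey [bty Py]]]]]] := X_ofP Hf.
  have [y' [_ [b2' [_ [ey' [bty' Py']]]]]] := X_ofP Hg.
  rewrite /= in b1 b2 ey bty Py b2' ey' bty' Py'.
  have E : tri e y = tri e y'.
    apply/eqP; apply/negP => /negP ne.
    exact: (disjE (pack_disj pk Py Py' ne) (tri_in e y) (tri_in e y')).
  have Eyy : y = y'.
    have : (hd e, y) \in tri e y' by rewrite -E !inE eqxx.
    move/in3 => [[]//|[[E1 E2]|[E1 E2]]].
    + by move: bty'; rewrite /between -E1 ltnn.
    + by move: bty; rewrite /between E2 ltnn.
  by apply: (endpt_uniq b2' b2 ey'); rewrite -Eyy.
- apply/forallP => x; apply/implyP => xX; apply/negP => xX'.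
  have [y [b1 [b2 [ne [ey [bty Py]]]]]] := X_ofP xX.
  have [y' [_ [_ [_ [ey' [bty' Py']]]]]] := X_ofP xX'.
  rewrite /= in ey' bty' Py'.
  have nT : tri x.1 y != tri x.2 y'.
    apply/negP => /eqP E; move: (tri_in x.1 y); rewrite E.
    move/in3 => [[E1 E2]|[[E1 E2]|[E1 E2]]]; move/eqP: ne; apply.
    + apply: back_uniq => //; tauto.
    + apply: back_uniq => //; tauto.
    + by rewrite /tl /hd in E1 E2; apply: injective_projections.
  have D := pack_disj pk Py Py' nT.
  case: ey => Ey; case: ey' => Ey'.
  + move: bty bty'; rewrite /between Ey Ey' => /andP[_ h1] /andP[_ h2].
    by move: (ltn_trans h1 h2); rewrite ltnn.
  + apply: (disjE D (z := (hd x.1, y))); first by rewrite !inE eqxx.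
    by rewrite !inE Ey Ey' eqxx !orbT.
  + apply: (disjE D (z := (y, tl x.1))); first by rewrite !inE eqxx !orbT.
    by rewrite !inE Ey Ey' eqxx.
  + move: bty bty'; rewrite /between Ey Ey' => /andP[h1 _] /andP[h2 _].
    by move: (ltn_trans h1 h2); rewrite ltnn.
Qed.

Definition condq (A : {set T * T}) (q : (T * T) * (T * T) * T) : bool :=
  [&& backward arc sigma q.1.1, backward arc sigma q.1.2,
      (q.2 == tl q.1.2) || (q.2 == hd q.1.2),
      between sigma (hd q.1.1) q.2 (tl q.1.1) & A == tri q.1.1 q.2].

Definition fq (d : (T * T) * (T * T)) (A : {set T * T}) :=
  if [pick q | condq A q] is Some q then q.1 else d.

Lemma fq_spec d P A : packing arc P -> A \in P ->
  fq d A \in X_of P /\ (tl (fq d A).1, hd (fq d A).1) \in A.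
Proof.
move=> pk AP; rewrite /fq; case: pickP => [q /and5P[b1 b2 ey bt /eqP EA]|N].
  split; last by rewrite EA tri_in.
  rewrite inE; apply/andP; split.
    apply/and4P; split => //.
      apply/negP => /eqP E; rewrite -E in ey.
      by case/orP: ey => /eqP Ey; move: bt; rewrite /between Ey ltnn ?andbF.
    by case/orP: ey => /eqP Ey; apply/orP; [right|left]; rewrite -Ey between_tri.
  by apply/existsP; exists q.2; rewrite ey bt -EA AP.
exfalso.
have [e [y [be bt EA]]] := tri_decomp (pack_tri pk AP).
case: Hfs => _ [_ /(_ y) [f [bf ey]]].
move: (N ((e, f), y)); rewrite /condq /= be bf bt EA eqxx /=.
by case: ey => ->; rewrite eqxx ?orbT.
Qed.

Lemma pn_le : packing_number arc <= maxX arc sigma.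
Proof.
apply/bigmax_leqP => P pk.
case: (set_0Vmem P) => [->|[A0 A0P]]; first by rewrite cards0.
have [e _] := tri_decomp (pack_tri pk A0P).
pose f := fq (e, e).
have inj : {in P &, injective f}.
  move=> A B AP BP E; apply/eqP; apply/negP => /negP ne.
  have [_ hA] := fq_spec (e, e) pk AP.
  have [_ hB] := fq_spec (e, e) pk BP.
  rewrite -/f E in hA; rewrite -/f in hB.
  exact: (disjE (pack_disj pk AP BP ne) hA hB).
rewrite -(card_in_imset inj).
apply: (leq_trans (n := #|X_of P|)).
  apply: subset_leq_card; apply/subsetP => x /imsetP[A AP ->].
  by case: (fq_spec (e, e) pk AP).
rewrite /maxX; exact: (@leq_bigmax_cond _ (goodX arc sigma) (fun X : {set (T * T) * (T * T)} => #|X|) _ (X_of_good pk)).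
Qed.
End Proof.


Theorem mainTheorem10 (T : finType) (arc : rel T) (sigma : T -> nat) :
  tournament arc -> injective sigma -> fully_sparse arc sigma ->
  packing_number arc = maxX arc sigma /\
  (forall (X : {set (T * T) * (T * T)}), goodX arc sigma X ->
   forall Pi : (T * T) * (T * T) -> {set T * T},
     (forall x, x \in X -> is_Pi sigma x (Pi x)) ->
     packing arc [set Pi x | x in X] /\
     (forall x y, x \in X -> y \in X -> x != y -> [disjoint Pi x & Pi y]) /\
     (#|X| = maxX arc sigma <-> max_packing arc [set Pi x | x in X])).
Proof.
move=> Ht Hi Hf.
have E : packing_number arc = maxX arc sigma.
  apply/eqP; rewrite eqn_leq; apply/andP; split; [apply: pn_le|apply: maxX_le]; assumption.
split => // X gX Pi HPi.
have := image_props Ht Hf gX HPi. move=> [pk cd].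
split => //; split; first by move=> x y xX yX nxy; exact: (Pi_disj Hf gX HPi xX yX nxy).
rewrite /max_packing pk cd E /=; split; [by move=> ->|by move/eqP].
Qed.
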